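(* Let $G$ be a finite graph, let $H$ be a connected graph, and let $f$ be a covering projection from $G$ to $H$. Let $S\subseteq V_G$ be a cutset of $G$ and let $A$ be (the vertex set of) a connected component of $G\setminus S$. Then for any two vertices $u,v\in V_H$ it holds that $|f^{-1}(u)\cap A|-|f^{-1}(v)\cap A|\le |S|$.
   Context: A graph is a triple $(V,\Lambda,\iota)$ where $V$ is a set of vertices, $\Lambda=E\cup L\cup S$ is a set of links partitioned into edges, loops and semi-edges, and $\iota$ assigns to each edge a 2-element subset of $V$ and to each loop or semi-edge a single vertex. A covering projection from $G$ to $H$ is a map $f:V_G\cup\Lambda_G\to V_H\cup\Lambda_H$ sending vertices to vertices and links to links such that: for every edge $e$ of $H$ with end-vertices $u,v$, $f^{-1}(e)$ is a perfect matching between $f^{-1}(u)$ and $f^{-1}(v)$; for every loop $l$ of $H$ at $u$, $f^{-1}(l)$ is a disjoint union of cycles (including 2-cycles formed by parallel edges, and loops) spanning $f^{-1}(u)$; for every semi-edge $s$ of $H$ at $u$, $f^{-1}(s)$ is a disjoint union of edges and semi-edges spanning $f^{-1}(u)$. A cutset of $G$ is a set of vertices whose removal disconnects $G$. *)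

(* Defs.v *)
From mathcomp Require Import all_boot all_order all_algebra.
Set Implicit Arguments. Unset Strict Implicit. Unset Printing Implicit Defensive.

Inductive lkind := Edge | Loop | Semi.

Definition is_edge (k : lkind) : bool := if k is Edge then true else false.

(* A graph (V, L, iota): every link l has a kind and two "end" slots
   end1 l, end2 l.  For an edge, iota(l) = {end1 l, end2 l}, a 2-element set;
   for a loop or semi-edge, iota(l) = {end1 l} (and end2 l = end1 l). *)
Definition wf_graph (V L : Type) (kind : L -> lkind) (end1 end2 : L -> V) :=
  forall l, if kind l is Edge then end1 l <> end2 l else end1 l = end2 l.

(* Contribution of link l to the degree of vertex x
   (an edge counts once at each end, a loop counts twice, a semi-edge once). *)
Definition mult (V : eqType) (L : Type) (kind : L -> lkind) (end1 end2 : L -> V)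
  (l : L) (x : V) : nat :=
  if kind l is Semi then (end1 l == x : nat)
  else (end1 l == x : nat) + (end2 l == x : nat).

Definition covering
  (VG LG : finType) (kG : LG -> lkind) (e1G e2G : LG -> VG)
  (VH LH : eqType) (kH : LH -> lkind) (e1H e2H : LH -> VH)
  (fV : VG -> VH) (fL : LG -> LH) : Prop :=
  forall e : LH,
  match kH e with
  | Edge =>
      (* f^{-1}(e) is a perfect matching between f^{-1}(u) and f^{-1}(v) *)
      (forall l, fL l = e -> kG l = Edge /\
         ((fV (e1G l) = e1H e /\ fV (e2G l) = e2H e) \/
          (fV (e1G l) = e2H e /\ fV (e2G l) = e1H e))) /\
      (forall x, fV x = e1H e \/ fV x = e2H e ->
         \sum_(l | fL l == e) mult kG e1G e2G l x = 1)
  | Loop =>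
      (* f^{-1}(e) is a disjoint union of cycles (edges and loops) spanning
         f^{-1}(u): a spanning 2-regular subgraph of the fibre *)
      (forall l, fL l = e -> kG l <> Semi /\
         fV (e1G l) = e1H e /\ fV (e2G l) = e1H e) /\
      (forall x, fV x = e1H e ->
         \sum_(l | fL l == e) mult kG e1G e2G l x = 2)
  | Semi =>
      (* f^{-1}(e) is a disjoint union of edges and semi-edges spanning
         f^{-1}(u) *)
      (forall l, fL l = e -> kG l <> Loop /\
         fV (e1G l) = e1H e /\ fV (e2G l) = e1H e) /\
      (forall x, fV x = e1H e ->
         \sum_(l | fL l == e) mult kG e1G e2G l x = 1)
  end.

(* Adjacency via edges (loops and semi-edges do not affect connectivity). *)
Definition adj (V L : Type) (kind : L -> lkind) (end1 end2 : L -> V) (x y : V) : Prop :=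
  exists l, kind l = Edge /\
    ((end1 l = x /\ end2 l = y) \/ (end1 l = y /\ end2 l = x)).

Inductive walk (V : Type) (R : V -> V -> Prop) : V -> V -> Prop :=
| walk_refl x : walk R x x
| walk_step x y z : R x y -> walk R y z -> walk R x z.

Definition connected_graph (V L : Type) (kind : L -> lkind) (end1 end2 : L -> V) :=
  forall x y : V, walk (adj kind end1 end2) x y.

Definition adjS (V L : finType) (kind : L -> lkind) (end1 end2 : L -> V)
  (S : {set V}) : rel V :=
  fun x y => [&& x \notin S, y \notin S &
    [exists l, is_edge (kind l) &&
      (((end1 l == x) && (end2 l == y)) || ((end1 l == y) && (end2 l == x)))]].

Definition cutset (V L : finType) (kind : L -> lkind) (end1 end2 : L -> V)
  (S : {set V}) : Prop :=
  exists x y, [/\ x \notin S, y \notin S & ~~ connect (adjS kind end1 end2 S) x y].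

Definition component_of (V L : finType) (kind : L -> lkind) (end1 end2 : L -> V)
  (S A : {set V}) : Prop :=
  exists a, a \notin S /\ A = [set y | connect (adjS kind end1 end2 S) a y].

(* Main.v *)
Require Import Defs.
From mathcomp Require Import all_boot all_order all_algebra.
From mathcomp Require Import zify.

Theorem mainTheorem2
  (VG LG : finType) (kG : LG -> lkind) (e1G e2G : LG -> VG)
  (VH LH : eqType) (kH : LH -> lkind) (e1H e2H : LH -> VH)
  (fV : VG -> VH) (fL : LG -> LH)
  (wfG : wf_graph kG e1G e2G) (wfH : wf_graph kH e1H e2H)
  (connH : connected_graph kH e1H e2H)
  (covf : covering kG e1G e2G kH e1H e2H fV fL)
  (S A : {set VG})
  (cutS : cutset kG e1G e2G S)
  (compA : component_of kG e1G e2G S A)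
  (u v : VH) :
  (((#|[set x in A | fV x == u]| : int) - (#|[set x in A | fV x == v]| : int)
    <= (#|S| : int))%R).
Proof.
have [a [aS defA]] := compA.
set R := adjS kG e1G e2G S.
have AnS : forall x, x \in A -> x \notin S.
  move=> x; rewrite defA inE => /connectP [p pth ->].
  case/lastP: p pth => [|p y] //=.
  by rewrite last_rcons rcons_path => /andP[_ /and3P[]].
have Aclosed : forall x y, x \in A -> R x y -> y \in A.
  move=> x y; rewrite defA !inE => ax rxy; exact: connect_trans ax (connect1 rxy).
have multpos : forall l y, kG l = Edge -> (e1G l = y \/ e2G l = y) ->
    (0 < mult kG e1G e2G l y)%N.
  move=> l y kl; rewrite /mult kl => -[->|->]; rewrite eqxx //=; lia.
have key : forall e w w', kH e = Edge ->
    (w = e1H e /\ w' = e2H e) \/ (w = e2H e /\ w' = e1H e) ->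
    (#|[set x in A | fV x == w]| <=
       #|[set x in A | fV x == w']| + #|[set y in S | fV y == w']|)%N.
  move=> e w w' ke hww.
  have := covf e; rewrite ke => -[lifts sum1].
  have ne := wfH e; rewrite ke in ne.
  have ww : w <> w'.
    by case: hww => -[-> ->] h; apply: ne.
  have sumx : forall x, fV x = w \/ fV x = w' ->
      \sum_(l | fL l == e) mult kG e1G e2G l x = 1%N.
    move=> x hx; apply: sum1.
    by case: hww => -[? ?]; subst; tauto.
  have endsP : forall l, fL l = e -> kG l = Edge /\
      ((fV (e1G l) = w /\ fV (e2G l) = w') \/ (fV (e1G l) = w' /\ fV (e2G l) = w)).
    move=> l le; have [kl h] := lifts l le; split => //.
    by case: hww => -[-> ->]; case: h => -[-> ->]; tauto.
  pose other l x := if e1G l == x then e2G l else e1G l.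
  pose phi x := if [pick l | (fL l == e) && (0 < mult kG e1G e2G l x)%N] is Some l
                then other l x else x.
  have phiP : forall x, fV x = w -> exists l, fL l = e /\
      ((e1G l = x /\ e2G l = phi x) \/ (e2G l = x /\ e1G l = phi x)) /\
      fV (phi x) = w'.
    move=> x hx; rewrite /phi.
    case: pickP => [l /andP[/eqP le mp]|none].
      exists l; split => //.
      have [kl ends] := endsP l le.
      move: mp; rewrite /mult kl /other.
      have nl := wfG l; rewrite kl in nl.
      case: (eqVneq (e1G l) x) => [e1x|e1x] /=.
        subst x; split; first by left.
        by case: ends => -[h1 h2] //; exfalso; apply: ww; rewrite -hx h1.
      rewrite add0n lt0b => /eqP e2x; subst x; split; first by right.
      by case: ends => -[h1 h2] //; exfalso; apply: ww; rewrite -hx h2.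
    exfalso; move: (sumx x (or_introl hx)); rewrite big1 // => l le.
    by move: (none l); rewrite le /= lt0n => /negbFE/eqP.
  have Ainj : {in [set x in A | fV x == w] &, injective phi}.
    move=> x1 x2; rewrite !inE => /andP[_ /eqP h1] /andP[_ /eqP h2] eqp.
    have [l1 [le1 [en1 fy1]]] := phiP x1 h1.
    have [l2 [le2 [en2 fy2]]] := phiP x2 h2.
    have kl1 := (endsP l1 le1).1; have kl2 := (endsP l2 le2).1.
    have l12 : l1 = l2.
      apply/eqP; apply/negPn/negP => nl.
      have s := sumx (phi x1) (or_intror fy1).
      have p1 : (0 < mult kG e1G e2G l1 (phi x1))%N by apply: multpos => //; tauto.
      have p2 : (0 < mult kG e1G e2G l2 (phi x1))%N by apply: multpos => //; rewrite eqp; tauto.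
      move: s; rewrite (bigD1 l1) /=; last by apply/eqP.
      rewrite (bigD1 l2) /=; last by rewrite le2 eqxx eq_sym.
      lia.
    subst l2.
    have nx : x1 <> phi x1 by move=> h; apply: ww; rewrite -h1 h.
    have nx2 : x2 <> phi x1 by move=> h; apply: ww; rewrite -h2 h.
    rewrite -eqp in en2.
    by case: en1 => -[a1 b1]; case: en2 => -[a2 b2]; congruence.
  rewrite -(card_in_imset Ainj).
  apply: (leq_trans (n := #|[set x in A | fV x == w'] :|: [set y in S | fV y == w']|)).
    apply: subset_leq_card; apply/subsetP => y /imsetP [x xin ->].
    move: xin; rewrite inE => /andP[xA /eqP hx].
    have [l [le [en fy]]] := phiP x hx.
    rewrite !inE fy eqxx !andbT.
    apply/orP; case: (boolP (phi x \in S)) => nS; [by right | left].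
    apply: (Aclosed x) => //.
    rewrite /R /adjS AnS // nS /=; apply/existsP; exists l.
    have kl := (endsP l le).1; rewrite kl /=.
    by case: en => -[-> ->]; rewrite !eqxx ?orbT.
  by rewrite cardsU; lia.
have claim : forall x z, walk (adj kH e1H e2H) x z -> exists V : seq VH, x \in V /\
    forall t, t \in V -> (#|[set y in A | fV y == t]| <=
      #|[set y in A | fV y == z]| + #|[set y in S | (fV y \in V) && (fV y != t)]|)%N.
  move=> x z; elim => {x z} [z|x y z rxy _ [V [yV IH]]].
    exists [:: z]; rewrite mem_seq1 eqxx; split => // t; rewrite mem_seq1 => /eqP ->; lia.
  exists (x :: V); rewrite mem_head; split => // t.
  have sub : forall t, (#|[set y in S | (fV y \in V) && (fV y != t)]| <=
                 #|[set y in S | (fV y \in x :: V) && (fV y != t)]|)%N.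
    move=> t'; apply: subset_leq_card; apply/subsetP => q; rewrite !inE.
    by case/and3P => -> -> ->; rewrite orbT.
  rewrite in_cons => /orP [/eqP ->|tV]; last first.
    by apply: leq_trans (IH t tV) _; rewrite leq_add2l.
  case: (boolP (x \in V)) => [xV|xnV].
    by apply: leq_trans (IH x xV) _; rewrite leq_add2l.
  have [l [kl ends]] := rxy.
  have hk : (#|[set q in A | fV q == x]| <=
       #|[set q in A | fV q == y]| + #|[set q in S | fV q == y]|)%N.
    apply: (key l) => //; case: ends => -[<- <-]; tauto.
  apply: (leq_trans hk).
  have := IH y yV.
  set T1 := [set q in S | _ && _].
  set T2 := [set q in S | fV q == y].
  set T := [set q in S | _ && _].
  have : (#|T1| + #|T2| <= #|T|)%N.
    rewrite -cardsUI.
    have -> : T1 :&: T2 = set0.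
      apply/setP => q; rewrite !inE.
      by case: (fV q == y) / eqP => [->|]; rewrite ?eqxx !andbF.
    rewrite cards0 addn0; apply: subset_leq_card; apply/subsetP => q.
    rewrite !inE.
    case/orP => [/and3P[-> qV _]|/andP[-> /eqP ->]] /=.
      by rewrite qV orbT /=; apply/eqP => h; move: xnV; rewrite -h qV.
    by rewrite yV orbT /=; apply/eqP => h; move: xnV; rewrite -h yV.
  lia.
have [V [uV H]] := claim u v (connH u v).
have h1 := H u uV.
have h2 : (#|[set y in S | (fV y \in V) && (fV y != u)]| <= #|S|)%N.
  by apply: subset_leq_card; apply/subsetP => q; rewrite inE => /andP[].
lia.
Qed.
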